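(* Let $k\ge 2$ and let $G$ be a $k$-uniform hypergraph on $[n]$, and let $S$ be a spanning $k$-star on $[n]$ (the family of all $k$-subsets of $[n]$ containing a fixed vertex $v$). Then: (i) $G$ dominates $S$ if and only if $\tilde H_{k-2}(K(G);\mathbb{Q})=0$; (ii) $S$ dominates $G$ if and only if $\tilde H_{k-1}(K(G);\mathbb{Q})=0$.
   Context: Let $X=(x_{ij})_{1\le i,j\le n}$ be a matrix of $n^2$ independent indeterminates over $\mathbb{Q}$, and $C_k(X)=(c_{S,T})$ its $k$-th compound matrix, indexed by $k$-subsets of $[n]$, with $c_{S,T}=\det(x_{ij})_{i\in S,j\in T}$ in $\mathbb{Q}(x_{ij})$. For families $F_1,F_2$ of $k$-subsets of $[n]$, $F_1$ dominates $F_2$ if the submatrix of $C_k(X)$ with rows indexed by $F_2$ and columns indexed by $F_1$ has rank $|F_2|$. For a $k$-uniform hypergraph $G$ on $[n]$, $K(G)$ is the $(k-1)$-dimensional simplicial complex on $[n]$ whose $(k-1)$-faces are the edges of $G$ and which contains all subsets of $[n]$ of size at most $k-1$ (complete $(k-2)$-skeleton). $\tilde H_i(\cdot;\mathbb{Q})$ denotes reduced rational homology. *)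

(* Defs.v *)
From HB Require Import structures.
From mathcomp Require Import all_boot all_order all_algebra fraction.
Set Implicit Arguments. Unset Strict Implicit. Unset Printing Implicit Defensive.
Import Order.TTheory GRing.Theory Num.Theory.
Local Open Scope ring_scope.

Fixpoint mpolyT (m : nat) : idomainType :=
  if m is m'.+1 then ({poly mpolyT m'} : idomainType) else (rat : idomainType).

(* the variable y_l of Q[y_0..y_{m-1}] (0 if l >= m) *)
Fixpoint mvar (m : nat) (l : nat) : mpolyT m :=
  match m return mpolyT m with
  | 0 => 0
  | m'.+1 => if l == m' then ('X : {poly mpolyT m'}) else (mvar m' l)%:P
  end.

(* The field Q(x_ij : 1 <= i,j <= n) of rational functions in n^2 indeterminates;
   x_ij (0-based indices i, j < n) is the variable y_(i*n+j). *)
Definition ratfun (n : nat) : fieldType := {fraction (mpolyT (n * n))}.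

Definition xvar (n : nat) (i j : nat) : ratfun n := @FracField.tofrac (mpolyT (n * n)) (mvar (n * n) (i * n + j)).

(* entry c_{S,T} = det (x_ij)_{i in S, j in T}, rows/columns in increasing order *)
Definition compound_entry (n k : nat) (S T : {set 'I_n}) : ratfun n :=
  \det (\matrix_(i < k, j < k)
          xvar n (nth 0%N (map val (enum S)) i) (nth 0%N (map val (enum T)) j)).

Definition compound_submx (n k : nat) (F2 F1 : {set {set 'I_n}}) :
  'M[ratfun n]_(#|F2|, #|F1|) :=
  \matrix_(i < #|F2|, j < #|F1|) compound_entry k (enum_val i) (enum_val j).

Definition dominates (n k : nat) (F1 F2 : {set {set 'I_n}}) : Prop :=
  \rank (compound_submx k F2 F1) = #|F2|.

Definition kstar (n k : nat) (v : 'I_n) : {set {set 'I_n}} :=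
  [set s : {set 'I_n} | (#|s| == k) && (v \in s)].

(* A simplicial complex on [n] is given by its set of faces (including the empty face,
   which yields reduced homology). *)

Definition KG (n k : nat) (G : {set {set 'I_n}}) : {set {set 'I_n}} :=
  [set s : {set 'I_n} | (#|s| <= k.-1)%N || (s \in G)].

Definition faces_card (n : nat) (K : {set {set 'I_n}}) (m : nat) : {set {set 'I_n}} :=
  [set s in K | #|s| == m].

(* oriented incidence coefficient [s : t] for t a facet of s: (-1)^(position of the
   removed vertex in s, ordered increasingly) *)
Definition incidence (n : nat) (s t : {set 'I_n}) : rat :=
  if t \subset s then (-1) ^+ #|[set u in s | [exists w in s :\: t, (u < w)%N]]| else 0.

(* boundary map d_d : C_d -> C_{d-1} (d-faces have d+1 vertices), as a matrix acting
   on row vectors; for d = 0 the target is spanned by the empty face (augmentation). *)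
Definition boundary (n : nat) (K : {set {set 'I_n}}) (d : nat) :
  'M[rat]_(#|faces_card K d.+1|, #|faces_card K d|) :=
  \matrix_(i < #|faces_card K d.+1|, j < #|faces_card K d|)
     incidence (enum_val i) (enum_val j).

(* dim_Q of reduced homology H~_d(K; Q) = ker d_d / im d_{d+1} *)
Definition rbetti (n : nat) (K : {set {set 'I_n}}) (d : nat) : nat :=
  \rank (kermx (boundary K d) :\: boundary K d.+1)%MS.

(* Main.v *)
Require Import Defs.
From HB Require Import structures.
From mathcomp Require Import all_boot all_order all_algebra fraction.
From mathcomp Require Import ring.
Set Implicit Arguments. Unset Strict Implicit. Unset Printing Implicit Defensive.
Import Order.TTheory GRing.Theory Num.Theory.
Local Open Scope ring_scope.

Fixpoint cst (m : nat) : rat -> mpolyT m :=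
  match m return rat -> mpolyT m with
  | 0 => fun x => x
  | m'.+1 => fun x => (cst m' x)%:P
  end.

Lemma cst_zmod m : zmod_morphism (cst m).
Proof. elim: m => [|m IH] x y //=. by rewrite IH polyCB. Qed.
Lemma cst_monoid m : monoid_morphism (cst m).
Proof. elim: m => [|m [IH1 IH2]] //=; split=> [|x y]; rewrite ?IH1 ?IH2 ?polyCM //. Qed.
HB.instance Definition _ m := GRing.isZmodMorphism.Build rat (mpolyT m) (cst m) (cst_zmod m).
HB.instance Definition _ m := GRing.isMonoidMorphism.Build rat (mpolyT m) (cst m) (cst_monoid m).

Fixpoint ev (a : nat -> rat) (m : nat) : mpolyT m -> rat :=
  match m return mpolyT m -> rat with
  | 0 => fun x => x
  | m'.+1 => fun p => horner (map_poly (@ev a m') p) (a m')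
  end.

Lemma ev_rm a m : zmod_morphism (@ev a m) /\ monoid_morphism (@ev a m).
Proof.
elim: m => [|m [IH1 IH2]] //=.
pose fm : {rmorphism mpolyT m -> rat} := HB.pack (@ev a m)
   (GRing.isZmodMorphism.Build _ _ _ IH1) (GRing.isMonoidMorphism.Build _ _ _ IH2).
have -> : map_poly (@ev a m) = map_poly fm by [].
split; first by move=> x y; rewrite rmorphB hornerD hornerN.
split=> [|x y]; first by rewrite rmorph1 hornerC.
by rewrite rmorphM hornerM.
Qed.
HB.instance Definition _ a m := GRing.isZmodMorphism.Build _ _ (@ev a m) (ev_rm a m).1.
HB.instance Definition _ a m := GRing.isMonoidMorphism.Build _ _ (@ev a m) (ev_rm a m).2.

Lemma ev_cst a m x : ev a (cst m x) = x.
Proof. elim: m => [|m IH] //=. by rewrite map_polyC hornerC; apply: IH. Qed.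

Lemma ev_mvar a m l : (l < m)%N -> ev a (mvar m l) = a l.
Proof.
elim: m => [|m IH] //= lt; case: eqP => [->|ne].
  by rewrite map_polyX hornerX.
rewrite map_polyC hornerC; apply: IH. by rewrite ltnS leq_eqVlt (introF eqP ne) in lt.
Qed.

Section Comb.
Variable n : nat.
Implicit Types s t u : {set 'I_n}.

Definition pos s (a : 'I_n) : nat := #|[set x in s | (x < a)%N]|.

Lemma setDD1 s a : a \in s -> s :\: (s :\ a) = [set a].
Proof.
move=> As; apply/setP=> x; rewrite !inE; case: (x =P a) => [->|]; rewrite ?As //.
by case: (x \in s).
Qed.

Lemma inc_D1 s a : a \in s -> incidence s (s :\ a) = (-1) ^+ pos s a.
Proof.
move=> As; rewrite /incidence subsetDl setDD1 //; congr (_ ^+ _).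
apply: eq_card => x; rewrite !inE; congr (_ && _).
apply/existsP/idP => [[w]|lt]; first by rewrite inE => /andP[/eqP-> ->].
by exists a; rewrite inE eqxx.
Qed.

Lemma facetP s t : t \subset s -> #|s| = #|t|.+1 -> exists2 c, c \in s & t = s :\ c.
Proof.
move=> ts cs.
have : #|s :\: t| = 1%N by rewrite cardsD (setIidPr ts) cs subSnn.
move/eqP/cards1P=> [c eq]; have cs' : c \in s :\: t by rewrite eq set11.
move: cs'; rewrite inE => /andP[ct cS]; exists c => //.
apply/eqP; rewrite eqEcard subsetD1 ts ct /=.
by move: cs; rewrite (cardsD1 c s) cS add1n => -[->].
Qed.

Lemma pos_D1_lt s (a b : 'I_n) : a \in s -> (a < b)%N -> pos (s :\ a) b = (pos s b).-1.
Proof.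
move=> As ab; rewrite /pos (cardsD1 a [set x in s | (x < b)%N]) inE As ab /=.
apply: eq_card => x; rewrite !inE; by case: (x == a).
Qed.

Lemma pos_D1_gt s (a b : 'I_n) : (a < b)%N -> pos (s :\ b) a = pos s a.
Proof.
move=> ab; rewrite /pos; apply: eq_card => x; rewrite !inE.
case: (x =P b) => [->|] //=; by rewrite [(b < a)%N]ltnNge ltnW ?andbF.
Qed.

Lemma pos_gt0 s (a b : 'I_n) : a \in s -> (a < b)%N -> (0 < pos s b)%N.
Proof. move=> As ab; apply/card_gt0P; exists a; by rewrite inE As. Qed.

Lemma dd0 (A : {set {set 'I_n}}) m s u :
  (forall t, (t \in A) = (#|t| == m.+1)) -> #|s| = m.+2 -> #|u| = m ->
  \sum_(t in A) incidence s t * incidence t u = 0.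
Proof.
move=> hA cs cu.
have inc0 : forall s' t', ~~ (t' \subset s') -> incidence s' t' = 0.
  by move=> s' t' /negPf h; rewrite /incidence h.
case us: (u \subset s); last first.
  apply: big1 => t _; case ts: (t \subset s); last by rewrite inc0 ?ts // mul0r.
  case ut: (u \subset t); last by rewrite (inc0 t) ?ut // mulr0.
  by move: us; rewrite (subset_trans ut ts).
have : #|s :\: u| == 2%N by rewrite cardsD (setIidPr us) cs cu -addn2 addKn.
case/cards2P=> a0 [b0 [ne0 e0]].
wlog ab : a0 b0 ne0 e0 / (a0 < b0)%N.
  move=> W; case: (ltngtP a0 b0) => h; first exact: (W a0 b0).
    by apply: (W b0 a0); rewrite 1?eq_sym // setUC.
  by move: ne0; rewrite (val_inj h) eqxx.
have As : a0 \in s by have := set21 a0 b0; rewrite -e0 inE => /andP[].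
have Bs : b0 \in s by have := set22 a0 b0; rewrite -e0 inE => /andP[].
have Au : a0 \notin u by have := set21 a0 b0; rewrite -e0 inE => /andP[].
have Bu : b0 \notin u by have := set22 a0 b0; rewrite -e0 inE => /andP[].
have Ain : s :\ a0 \in A by rewrite hA; apply/eqP; move: cs; rewrite (cardsD1 a0 s) As add1n => -[].
have Bin : s :\ b0 \in A by rewrite hA; apply/eqP; move: cs; rewrite (cardsD1 b0 s) Bs add1n => -[].
have neAB : s :\ a0 != s :\ b0.
  apply/negP=> /eqP e; have : b0 \in s :\ a0 by rewrite !inE Bs andbT eq_sym.
  by rewrite e !inE eqxx.
rewrite (bigD1 (s :\ a0)) //= (bigD1 (s :\ b0)) /=; last by rewrite Bin eq_sym neAB.
rewrite big1 ?addr0; last first.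
  move=> t /andP[/andP[tA na] nb].
  case ts: (t \subset s); last by rewrite inc0 ?ts // mul0r.
  case ut: (u \subset t); last by rewrite (inc0 t) ?ut // mulr0.
  have [c cs' tc] : exists2 c, c \in s & t = s :\ c.
    by apply: facetP => //; rewrite cs; move: tA; rewrite hA => /eqP ->.
  have : c \in s :\: u.
    rewrite inE cs' andbT; apply/negP=> cu'; move/subsetP: ut => /(_ c cu').
    by rewrite tc !inE eqxx.
  by rewrite e0 !inE => /orP[] /eqP ce; move: na nb; rewrite tc ce eqxx.
have uA : s :\ a0 :\: u = [set b0].
  apply/setP=> x; rewrite !inE; apply/idP/idP.
    move=> /andP[xu /andP[xa xs]]; have : x \in s :\: u by rewrite inE xu xs.
    by rewrite e0 !inE (negPf xa).
  move/eqP=> ->; by rewrite Bu Bs eq_sym ne0.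
have uB : s :\ b0 :\: u = [set a0].
  apply/setP=> x; rewrite !inE; apply/idP/idP.
    move=> /andP[xu /andP[xb xs]]; have : x \in s :\: u by rewrite inE xu xs.
    by rewrite e0 !inE (negPf xb) orbF.
  move/eqP=> ->; by rewrite Au As ne0.
have incF : forall s' t' c, t' \subset s' -> s' :\: t' = [set c] ->
    incidence s' t' = (-1) ^+ pos s' c.
  move=> s' t' c ts' e; rewrite /incidence ts' e; congr (_ ^+ _).
  apply: eq_card => x; rewrite !inE; congr (_ && _).
  apply/existsP/idP => [[w]|lt]; first by rewrite inE => /andP[/eqP-> ->].
  by exists c; rewrite inE eqxx.
have uAs : u \subset s :\ a0 by rewrite subsetD1 us Au.
have uBs : u \subset s :\ b0 by rewrite subsetD1 us Bu.
rewrite !inc_D1 // (incF _ _ b0) // (incF _ _ a0) // pos_D1_lt // pos_D1_gt //.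
have := pos_gt0 As ab; case: (pos s b0) => // p _ /=.
by rewrite exprS mulrC mulN1r mulNr addrN.
Qed.

End Comb.

Definition mxOf (R : Type) (T1 T2 : finType) (A : {set T1}) (B : {set T2})
  (f : T1 -> T2 -> R) : 'M[R]_(#|A|, #|B|) :=
  \matrix_(i, j) f (enum_val i) (enum_val j).

Lemma mulmxOf (R : pzRingType) (T1 T2 T3 : finType) (A : {set T1}) (B : {set T2}) (C : {set T3}) f g :
  mxOf A B f *m mxOf B C g = mxOf A C (fun a c => \sum_(b in B) (f a b : R) * g b c).
Proof.
apply/matrixP=> i j; rewrite !mxE.
rewrite (big_enum_val (fun b => f (enum_val i) b * g b (enum_val j))).
by apply: eq_bigr => l _; rewrite !mxE.
Qed.

Lemma trmxOf (R : Type) (T1 T2 : finType) (A : {set T1}) (B : {set T2}) (f : T1 -> T2 -> R) :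
  (mxOf A B f)^T = mxOf B A (fun b a => f a b).
Proof. by apply/matrixP=> i j; rewrite !mxE. Qed.

Lemma mapmxOf (R S : Type) (T1 T2 : finType) (A : {set T1}) (B : {set T2}) (f : T1 -> T2 -> R) (h : R -> S) :
  map_mx h (mxOf A B f) = mxOf A B (fun a b => h (f a b)).
Proof. by apply/matrixP=> i j; rewrite !mxE. Qed.

Lemma eq_mxOf (R : Type) (T1 T2 : finType) (A : {set T1}) (B : {set T2}) (f g : T1 -> T2 -> R) :
  {in A & B, forall a b, f a b = g a b} -> mxOf A B f = mxOf A B g.
Proof. by move=> e; apply/matrixP=> i j; rewrite !mxE e ?enum_valP. Qed.

Lemma rank_scale (F : fieldType) (T1 T2 : finType) (A : {set T1}) (B : {set T2}) (f : T1 -> T2 -> F) (d1 : T1 -> F) (d2 : T2 -> F) :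
  (\rank (mxOf A B (fun a b => (d1 a * f a b * d2 b)%R)) <= \rank (mxOf A B f))%N.
Proof.
have -> : mxOf A B (fun a b => d1 a * f a b * d2 b) =
   diag_mx (\row_i d1 (enum_val i)) *m mxOf A B f *m diag_mx (\row_j d2 (enum_val j)).
  by apply/matrixP=> i j; rewrite mul_mx_diag mul_diag_mx !mxE.
by apply: leq_trans (mxrankM_maxl _ _) _; apply: mxrankM_maxr.
Qed.

Section Kernel.
Variables (n k' : nat) (v : 'I_n) (F1 F2 : {set {set 'I_n}}).
Hypothesis hF1 : forall t, (t \in F1) = (#|t| == k'.+1).
Hypothesis hF2 : forall t, (t \in F2) = (#|t| == k').

Definition Star := kstar k'.+2 v.
Definition Qm : 'M[rat]_(#|F1|, #|Star|) := mxOf F1 Star (fun F S => (F == S :\ v)%:R).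
Definition Bd : 'M[rat]_(#|F1|, #|F2|) := mxOf F1 F2 (fun s t => incidence s t).

Lemma Zinj (u : 'rV[rat]_#|F1|) : u *m Bd = 0 -> u *m Qm = 0 -> u = 0.
Proof.
move=> uB uQ.
have case1 : forall i : 'I_#|F1|, v \notin enum_val i -> u 0 i = 0.
  move=> i vi; set F := enum_val i.
  have cF : #|F| = k'.+1 by apply/eqP; rewrite -hF1 enum_valP.
  have SS : v |: F \in Star by rewrite inE cardsU1 vi cF eqxx setU11.
  move/matrixP: (uQ) => /(_ 0 (enum_rank_in SS (v |: F))).
  rewrite !mxE (bigD1 i) //= big1 ?addr0.
    by rewrite !mxE enum_rankK_in // setU1K // eqxx mulr1.
  move=> i' ne; rewrite !mxE enum_rankK_in // setU1K //.
  by case: eqP => [/enum_val_inj e|]; [rewrite e eqxx in ne | rewrite mulr0].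
apply/rowP=> i; rewrite mxE; case vi: (v \in enum_val i); last by rewrite case1 ?vi.
set F := enum_val i.
have cF : #|F| = k'.+1 by apply/eqP; rewrite -hF1 enum_valP.
have UF2 : F :\ v \in F2 by rewrite hF2; move: cF; rewrite (cardsD1 v) vi add1n => -[->].
move/matrixP: uB => /(_ 0 (enum_rank_in UF2 (F :\ v))).
rewrite !mxE (bigD1 i) //= big1 ?addr0.
  rewrite !mxE enum_rankK_in // inc_D1 //.
  by move/eqP; rewrite mulf_eq0 signr_eq0 orbF => /eqP.
move=> i' ne; rewrite !mxE enum_rankK_in //.
case vi': (v \in enum_val i'); last by rewrite case1 ?vi' // mul0r.
rewrite /incidence; case: ifP => [sub|]; last by rewrite mulr0.
have cF' : #|enum_val i'| = k'.+1 by apply/eqP; rewrite -hF1 enum_valP.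
have : F :\ v = enum_val i' :\ v.
  apply/eqP; rewrite eqEcard subsetD1 sub setD11 /=.
  have c1 : #|enum_val i' :\ v| = k' by move: cF'; rewrite (cardsD1 v) vi' add1n => -[].
  have c2 : #|F :\ v| = k' by move: cF; rewrite (cardsD1 v) vi add1n => -[].
  by rewrite c1 c2.
move=> e; have ee : F = enum_val i' by apply: (etrans (esym (setD1K vi))); rewrite -/F e setD1K.
by move/enum_val_inj: ee => ee; move: ne; rewrite ee eqxx.
Qed.

Lemma rankMQ m (M : 'M[rat]_(m, #|F1|)) : M *m Bd = 0 -> \rank (M *m Qm) = \rank M.
Proof.
move=> MB.
have h : \rank (M :&: kermx Qm)%MS = 0%N.
  apply/eqP; rewrite mxrank_eq0; apply/eqP/row_matrixP => i; rewrite row0.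
  set w := row i (M :&: kermx Qm)%MS.
  have wM : (w <= M)%MS by apply: submx_trans (row_sub _ _) (capmxSl _ _).
  have wQ : (w <= kermx Qm)%MS by apply: submx_trans (row_sub _ _) (capmxSr _ _).
  apply: Zinj; last by apply/eqP; rewrite -sub_kermx.
  by case/submxP: wM => D ->; rewrite -mulmxA MB mulmx0.
by rewrite -(mxrank_mul_ker M Qm) h addn0.
Qed.

Lemma rank_le_star m (M : 'M[rat]_(m, #|F1|)) : M *m Bd = 0 -> (\rank M <= #|Star|)%N.
Proof. by move=> MB; rewrite -rankMQ // rank_leq_col. Qed.

Lemma sum_delta (T : finType) (R : pzRingType) (A : {set T}) (S : T) (g : T -> R) :
  S \in A -> \sum_(x in A) (x == S)%:R * g x = g S.
Proof.
move=> SA; rewrite (bigD1 S) //= eqxx mul1r big1 ?addr0 // => x /andP[_ /negPf ->].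
by rewrite mul0r.
Qed.

Lemma sum_delta_r (T : finType) (R : pzRingType) (A : {set T}) (S : T) (g : T -> R) :
  S \in A -> \sum_(x in A) g x * (x == S)%:R = g S.
Proof.
move=> SA; rewrite (bigD1 S) //= eqxx mulr1 big1 ?addr0 // => x /andP[_ /negPf ->].
by rewrite mulr0.
Qed.

Definition Fk := [set s : {set 'I_n} | #|s| == k'.+2].
Definition Ball : 'M[rat]_(#|Fk|, #|F1|) := mxOf Fk F1 (fun s t => incidence s t).

Lemma Ball_full : (#|Star| <= \rank (Ball *m Qm))%N.
Proof.
pose E : 'M[rat]_(#|Star|, #|Fk|) := mxOf Star Fk (fun S T => (T == S)%:R).
have starK : forall S, S \in Star -> S \in Fk /\ v \in S.
  by move=> S; rewrite !inE => /andP[].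
have eD : E *m (Ball *m Qm) = mxOf Star Star (fun S S' => incidence S (S' :\ v)).
  rewrite /Ball /Qm !mulmxOf; apply: eq_mxOf => S S' SS SS'.
  rewrite sum_delta; last by case: (starK _ SS).
  rewrite sum_delta_r // hF1; case: (starK _ SS') => /[!inE] /eqP c vS'.
  by move: c; rewrite (cardsD1 v) vS' add1n => -[->].
have hD : mxOf Star Star (fun S S' => incidence S (S' :\ v)) =
     diag_mx (\row_(j < #|Star|) incidence (enum_val j) (enum_val j :\ v)).
  apply/matrixP=> i j; rewrite !mxE; case: eqP => [->|ne]; first by rewrite mulr1n.
  rewrite mulr0n /incidence; case: ifP => // sub; exfalso; apply: ne.
  apply: enum_val_inj; have [Fi vi] := starK _ (enum_valP i).
  have [Fj vj] := starK _ (enum_valP j).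
  apply/esym/eqP; rewrite eqEcard.
  have -> : enum_val j \subset enum_val i.
    by rewrite -(setD1K vj) subUset sub1set vi sub.
  by rewrite /=; move: Fi Fj; rewrite !inE => /eqP -> /eqP ->.
have unitD : diag_mx (\row_(j < #|Star|) incidence (enum_val j) (enum_val j :\ v)) \in unitmx.
  rewrite unitmxE det_diag unitfE; apply/prodf_neq0 => j _; rewrite mxE inc_D1.
    by rewrite signr_eq0.
  by case: (starK _ (enum_valP j)).
rewrite -[X in (X <= _)%N](mxrank_unit unitD) -hD -eD; exact: mxrankM_maxr.
Qed.

End Kernel.

Lemma boundaryE n (K : {set {set 'I_n}}) d :
  boundary K d = mxOf (faces_card K d.+1) (faces_card K d) (fun s t => incidence s t).
Proof. by []. Qed.

Section Betti.
Variables (n k' : nat) (G : {set {set 'I_n}}).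
Hypothesis hG : forall e, e \in G -> #|e| = k'.+2.
Local Notation K := (KG k'.+2 G).

Lemma faces_low m t : (m <= k'.+1)%N -> (t \in faces_card K m) = (#|t| == m).
Proof.
move=> le; rewrite !inE; case: eqP => [->|]; last by rewrite andbF.
by rewrite le.
Qed.

Lemma faces_top t : (t \in faces_card K k'.+2) = (t \in G).
Proof.
rewrite !inE; case tG: (t \in G); first by rewrite orbT (hG tG) eqxx.
by rewrite orbF; case: eqP => [->|]; rewrite ?ltnn ?andbF.
Qed.

Lemma faces_top1 : faces_card K k'.+3 = set0.
Proof.
apply/setP=> t; rewrite !inE; case: eqP => [ct|]; last by rewrite andbF.
case tG: (t \in G); first by move: ct; rewrite (hG tG) => /eqP; rewrite eqn_leq ltnn andbF.
by rewrite ct orbF andbT ltnNge /= ltnW.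
Qed.

Lemma dd_zero (A : {set {set 'I_n}}) (hA : forall s, s \in A -> #|s| = k'.+2) :
  mxOf A (faces_card K k'.+1) (fun s t => incidence s t) *m boundary K k' = 0.
Proof.
rewrite boundaryE mulmxOf; apply/matrixP=> i j; rewrite !mxE.
apply: (@dd0 _ _ k'); first by move=> t; rewrite faces_low.
  exact: hA (enum_valP i).
by apply/eqP; rewrite -faces_low // enum_valP.
Qed.

Lemma rbetti_low : rbetti K k' =
  (#|faces_card K k'.+1| - \rank (boundary K k') - \rank (boundary K k'.+1))%N.
Proof.
rewrite /rbetti.
have sub : (boundary K k'.+1 <= kermx (boundary K k'))%MS.
  by rewrite sub_kermx boundaryE dd_zero // => s; rewrite faces_top => /hG.
have := mxrank_cap_compl (kermx (boundary K k')) (boundary K k'.+1).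
rewrite (eqmx_rank (introT eqmxP (capmx_idPr sub))) mxrank_ker => <-.
by rewrite addKn.
Qed.

Lemma rbetti_top : rbetti K k'.+1 =
  (#|faces_card K k'.+2| - \rank (boundary K k'.+1))%N.
Proof.
rewrite /rbetti -mxrank_ker.
have := mxrank_cap_compl (kermx (boundary K k'.+1)) (boundary K k'.+2).
have -> : \rank (kermx (boundary K k'.+1) :&: boundary K k'.+2)%MS = 0%N.
  apply/eqP; rewrite -leqn0; apply: leq_trans (mxrankS (capmxSr _ _)) _.
  by apply: leq_trans (rank_leq_row _) _; rewrite faces_top1 cards0.
by rewrite add0n.
Qed.

End Betti.

Lemma nth_rem (T : eqType) (x0 x : T) s i :
  nth x0 (rem x s) i = nth x0 s (bump (index x s) i).
Proof.
elim: s i => [|y s IH] i /=; first by rewrite !nth_nil.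
case: eqP => [->|ne] /=; first by rewrite /bump /=; case: i.
case: i => [|i] //=; by rewrite IH bumpS.
Qed.

Section Enum.
Variable n : nat.
Definition ltI : rel 'I_n := fun a b => (a < b)%N.

Lemma ltI_trans : transitive ltI.
Proof. move=> a b c; exact: ltn_trans. Qed.

Lemma enum_sorted (S : {set 'I_n}) : sorted ltI (enum S).
Proof.
rewrite /enum_mem -enumT; apply: sorted_filter; first exact: ltI_trans.
by have := iota_ltn_sorted 0 n; rewrite -val_enum_ord sorted_map.
Qed.

Lemma enum_D1 (S : {set 'I_n}) x : enum (S :\ x) = rem x (enum S).
Proof.
apply: (irr_sorted_eq ltI_trans); first by move=> a; exact: ltnn.
- exact: enum_sorted.
- apply: subseq_sorted (rem_subseq _ _) (enum_sorted S); exact: ltI_trans.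
move=> y; rewrite mem_enum (mem_rem_uniq _ (enum_uniq _)) !inE mem_enum.
by [].
Qed.

Lemma index_count (s : seq 'I_n) x : sorted ltI s -> x \in s ->
  index x s = count (fun y : 'I_n => (y < x)%N) s.
Proof.
elim: s => [|y s IH] //= srt; have allp := order_path_min ltI_trans srt.
have srt' := path_sorted srt.
rewrite inE; case: eqP => [->|ne] /= xs.
  rewrite eqxx ltnn add0n; apply/esym/eqP; rewrite -leqn0 leqNgt -has_count.
  apply/hasPn => z zs; rewrite -leqNgt ltnW //; exact: (allP allp z zs).
have -> : (y == x) = false by apply/eqP => e; apply: ne.
by rewrite IH //; have := allP allp x xs; rewrite /ltI => ->.
Qed.

Lemma index_pos (S : {set 'I_n}) x : x \in S -> index x (enum S) = pos S x.
Proof.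
move=> xS; rewrite index_count ?mem_enum ?enum_sorted //.
rewrite /pos cardE /enum_mem size_filter count_filter.
by apply: eq_count => y; rewrite !inE andbC.
Qed.

Lemma nth_map_val x0 (s : seq 'I_n) i : (i < size s)%N ->
  nth 0%N (map val s) i = val (nth x0 s i).
Proof. by move=> lt; rewrite (nth_map x0). Qed.

End Enum.

Definition minor (R : pzRingType) (n k : nat) (f : nat -> nat -> R) (S T : {set 'I_n}) : R :=
  \det (\matrix_(i < k, j < k) f (nth 0%N (map val (enum S)) i) (nth 0%N (map val (enum T)) j)).

Lemma compound_minor n k S T : compound_entry k S T = minor k (@xvar n) S T.
Proof. by []. Qed.

Lemma minor_laplace (R : comNzRingType) n (f : nat -> nat -> R) k (S T : {set 'I_n}) v :
  #|S| = k.+1 -> #|T| = k.+1 -> v \in S ->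
  minor k.+1 f S T = (-1) ^+ pos S v *
     \sum_(t in T) (-1) ^+ pos T t * f v t * minor k f (S :\ v) (T :\ t).
Proof.
move=> cS cT vS.
have pS : (pos S v < k.+1)%N by rewrite -cS -index_pos // cardE index_mem mem_enum.
pose p := Ordinal pS.
rewrite /minor (expand_det_row _ p) big_distrr /=.
rewrite (big_enum_val (fun t => (-1) ^+ pos S v * ((-1) ^+ pos T t * f v t * _))) /=.
have e1 : forall j : 'I_#|T|, pos T (enum_val j) = j.
  move=> j; rewrite -index_pos ?enum_valP // (enum_val_nth v) index_uniq ?enum_uniq //.
  by rewrite -cardE.
pose G := fun j : nat => (-1) ^+ (pos S v + j) * f v (nth v (enum T) j) *
   \det (\matrix_(i < k, j0 < k) f (nth 0%N (map val (enum (S :\ v))) i)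
        (nth 0%N (map val (enum (T :\ nth v (enum T) j))) j0)).
transitivity (\sum_(j < k.+1) G j).
  apply: eq_bigr => j _; rewrite /cofactor !mxE /G.
  have jT : (j < size (enum T))%N by rewrite -cardE cT.
  have pSz : (p < size (enum S))%N by rewrite -cardE cS.
  rewrite (nth_map_val v pSz) (nth_map_val v jT) /= -index_pos // nth_index ?mem_enum //.
  rewrite mulrCA mulrA; congr (_ * _ * \det _); apply/matrixP => i j0; rewrite !mxE.
  have iz : (lift p i < size (enum S))%N by rewrite -cardE cS.
  have jz : (lift j j0 < size (enum T))%N by rewrite -cardE cT.
  have iz' : (i < size (enum (S :\ v)))%N.
    by rewrite -cardE; move: cS; rewrite (cardsD1 v) vS add1n => -[->].
  have tT : nth v (enum T) j \in T by rewrite -mem_enum mem_nth.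
  have jz' : (j0 < size (enum (T :\ nth v (enum T) j)))%N.
    by rewrite -cardE; move: cT; rewrite (cardsD1 (nth v (enum T) j)) tT add1n => -[->].
  rewrite (nth_map_val v iz) (nth_map_val v jz) (nth_map_val v iz') (nth_map_val v jz').
  rewrite !enum_D1 !nth_rem index_pos // index_uniq ?enum_uniq //.
rewrite -(big_mkord xpredT G).
have -> : \sum_(i < #|T|) (-1) ^+ pos S v * ((-1) ^+ pos T (enum_val i) * f v (enum_val i) *
      minor k f (S :\ v) (T :\ enum_val i)) = \sum_(i < #|T|) G i.
  apply: eq_bigr => j _; rewrite e1 /G /minor (enum_val_nth v) exprD !mulrA.
  by [].
by rewrite -(big_mkord xpredT G) cT.
Qed.

Lemma rank_rowsub (F : fieldType) m m' n (f : 'I_m' -> 'I_m) (A : 'M[F]_(m, n)) :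
  (\rank (rowsub f A) <= \rank A)%N.
Proof. by rewrite rowsubE mxrankM_maxr. Qed.

Lemma rank_mxsub (F : fieldType) m n m' n' (f : 'I_m' -> 'I_m) (g : 'I_n' -> 'I_n) (A : 'M[F]_(m, n)) :
  (\rank (mxsub f g A) <= \rank A)%N.
Proof.
have -> : mxsub f g A = (rowsub g (rowsub f A)^T)^T by apply/matrixP=> i j; rewrite !mxE.
rewrite mxrank_tr; apply: leq_trans (rank_rowsub _ _) _.
by rewrite mxrank_tr rank_rowsub.
Qed.

Lemma rank_specialize (R : idomainType) (F : fieldType) (h : {rmorphism R -> F})
   m1 m2 (P : 'M[R]_(m1, m2)) :
  (\rank (map_mx h P) <= \rank (map_mx (@FracField.tofrac R) P))%N.
Proof.
set Pr := map_mx h P; set r := \rank Pr.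
pose f1 := maxrankfun Pr.
have fr : row_free (rowsub f1 Pr) := maxrowsub_free Pr.
have rk : row_full (rowsub f1 Pr)^T.
  by rewrite /row_full mxrank_tr; move: fr; rewrite /row_free.
pose g := fullrankfun rk.
have U : rowsub g (rowsub f1 Pr)^T \in unitmx := fullrowsub_unit rk.
pose M' : 'M[R]_r := \matrix_(i, j) P (f1 j) (g i).
have e1 : map_mx h M' = rowsub g (rowsub f1 Pr)^T by apply/matrixP=> i j; rewrite !mxE.
have dM : \det M' != 0.
  apply: contraTneq U => d0; rewrite unitmxE -e1 det_map_mx d0 rmorph0 unitfE eqxx //.
have U' : map_mx (@FracField.tofrac R) M' \in unitmx.
  by rewrite unitmxE det_map_mx unitfE tofrac_eq0.
rewrite -[X in (X <= _)%N](mxrank_unit U').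
have -> : map_mx (@FracField.tofrac R) M' = (mxsub f1 g (map_mx (@FracField.tofrac R) P))^T.
  by apply/matrixP=> i j; rewrite !mxE.
by rewrite mxrank_tr rank_mxsub.
Qed.

Section MinorFacts.
Variable n : nat.
Implicit Types A B s t T F : {set 'I_n}.

Lemma minor_map (R S : comNzRingType) (h : {rmorphism R -> S}) k (f : nat -> nat -> R) A B :
  h (minor k f A B) = minor k (fun a b => h (f a b)) A B.
Proof. by rewrite /minor -det_map_mx; congr (\det _); apply/matrixP=> i j; rewrite !mxE. Qed.

Lemma minor_tr (R : comNzRingType) k (f : nat -> nat -> R) A B :
  minor k f A B = minor k (fun a b => f b a) B A.
Proof. by rewrite /minor -det_tr; congr (\det _); apply/matrixP=> i j; rewrite !mxE. Qed.

Lemma minor_eq (R : comNzRingType) (x0 : 'I_n) k (f g : nat -> nat -> R) A B :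
  #|A| = k -> #|B| = k ->
  (forall a b : 'I_n, a \in A -> b \in B -> f a b = g a b) ->
  minor k f A B = minor k g A B.
Proof.
move=> cA cB e; rewrite /minor; congr (\det _); apply/matrixP=> i j; rewrite !mxE.
have iz : (i < size (enum A))%N by rewrite -cardE cA.
have jz : (j < size (enum B))%N by rewrite -cardE cB.
rewrite (nth_map_val x0 iz) (nth_map_val x0 jz) e // -mem_enum mem_nth //.
Qed.

Lemma minor_delta (R : comNzRingType) (x0 : 'I_n) k A B :
  #|A| = k -> #|B| = k ->
  minor k (fun a b => ((a == b)%:R : R)) A B = (A == B)%:R.
Proof.
move=> cA cB; case: eqP => [<-|ne].
  rewrite /minor; transitivity (\det (1%:M : 'M[R]_k)); last by rewrite det1.
  congr (\det _); apply/matrixP=> i j; rewrite !mxE.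
  have iz : (i < size (enum A))%N by rewrite -cardE cA.
  have jz : (j < size (enum A))%N by rewrite -cardE cA.
  rewrite (nth_map_val x0 iz) (nth_map_val x0 jz).
  by rewrite (inj_eq val_inj) nth_uniq ?enum_uniq.
have [a aA aB] : exists2 a, a \in A & a \notin B.
  apply/exists_inP; rewrite -(negbK [exists _ in _, _]) negb_exists_in.
  apply/negP=> /forall_inP sub; apply: ne; apply/eqP; rewrite eqEcard cA cB leqnn andbT.
  by apply/subsetP=> x /sub; rewrite negbK.
have iz : (index a (enum A) < k)%N by rewrite -cA cardE index_mem mem_enum.
rewrite /minor (expand_det_row _ (Ordinal iz)) big1 // => j _; rewrite !mxE.
have iz' : (index a (enum A) < size (enum A))%N by rewrite -cardE cA.
have jz : (j < size (enum B))%N by rewrite -cardE cB.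
rewrite (nth_map_val x0 iz') (nth_map_val x0 jz) (inj_eq val_inj) nth_index ?mem_enum //.
case: eqP => [e|]; last by rewrite mul0r.
by exfalso; move: aB; rewrite e -mem_enum mem_nth.
Qed.

Definition incR (R : pzRingType) (s t : {set 'I_n}) : R :=
  if t \subset s then (-1) ^+ #|[set u in s | [exists w in s :\: t, (u < w)%N]]| else 0.

Lemma incidenceE s t : incidence s t = incR rat s t.
Proof. by []. Qed.

Lemma incR_map (R S : pzRingType) (h : {rmorphism R -> S}) s t : h (incR R s t) = incR S s t.
Proof. by rewrite /incR; case: ifP => _; rewrite ?rmorph0 // rmorphXn rmorphN1. Qed.

Lemma incR_D1 (R : pzRingType) s a : a \in s -> incR R s (s :\ a) = (-1) ^+ pos s a.
Proof.
move=> As; rewrite /incR subsetDl setDD1 //; congr (_ ^+ _).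
apply: eq_card => x; rewrite !inE; congr (_ && _).
apply/existsP/idP => [[w]|lt]; first by rewrite inE => /andP[/eqP-> ->].
by exists a; rewrite inE eqxx.
Qed.

Lemma setD1_inj s a b : a \in s -> b \in s -> s :\ a = s :\ b -> a = b.
Proof.
move=> As Bs e; apply/eqP; apply/negPn/negP => ne.
have : a \in s :\ b by rewrite !inE ne As.
by rewrite -e !inE eqxx.
Qed.

Lemma incR_sum (R : pzRingType) m T F : #|T| = m.+1 -> #|F| = m ->
  incR R T F = \sum_(t in T) (-1) ^+ pos T t * (F == T :\ t)%:R.
Proof.
move=> cT cF; case FT: (F \subset T); last first.
  rewrite /incR FT big1 // => t _; case: eqP => [e|]; last by rewrite mulr0.
  by move: FT; rewrite e subsetDl.
have [c cT' ->] := facetP FT (etrans cT (congr1 S (esym cF))).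
rewrite incR_D1 // (bigD1 c) //= eqxx mulr1 big1 ?addr0 // => t /andP[tT ne].
case: eqP => [e|]; last by rewrite mulr0.
by move: ne; rewrite (setD1_inj cT' tT e) eqxx.
Qed.

End MinorFacts.

Definition phi (n : nat) (x : rat) : ratfun n := @FracField.tofrac _ (cst (n * n) x).
Lemma phi_zmod n : zmod_morphism (@phi n).
Proof. by move=> x y; rewrite /phi !rmorphB. Qed.
Lemma phi_monoid n : monoid_morphism (@phi n).
Proof. by split=> [|x y]; rewrite /phi ?rmorph1 // !rmorphM. Qed.
HB.instance Definition _ n := GRing.isZmodMorphism.Build rat (ratfun n) (@phi n) (phi_zmod n).
HB.instance Definition _ n := GRing.isMonoidMorphism.Build rat (ratfun n) (@phi n) (phi_monoid n).

Definition spec (n : nat) (v : 'I_n) (i j : nat) : rat := if i == v then 1 else (i == j)%:R.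

Section Core.
Variables (n k' : nat) (v : 'I_n) (G F1 : {set {set 'I_n}}).
Hypothesis hG : forall e, e \in G -> #|e| = k'.+2.
Hypothesis hF1 : forall t, (t \in F1) = (#|t| == k'.+1).
Variables (p : nat -> nat -> mpolyT (n * n)) (a : nat -> rat).
Hypothesis hp : forall i j : 'I_n, ev a (p i j) = spec v i j.

Local Notation tf := (@FracField.tofrac (mpolyT (n * n))).
Local Notation f := (fun i j : nat => tf (p i j)).
Definition Cmx : 'M[ratfun n]_(#|Star k' v|, #|G|) := mxOf (Star k' v) G (fun S T => minor k'.+2 f S T).
Definition Bm : 'M[rat]_(#|G|, #|F1|) := mxOf G F1 (fun s t => incidence s t).

Lemma starP (S : {set 'I_n}) : S \in Star k' v -> #|S| = k'.+2 /\ v \in S.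
Proof. by rewrite inE => /andP[/eqP-> ->]. Qed.

Lemma cardD1k (S : {set 'I_n}) x : #|S| = k'.+2 -> x \in S -> #|S :\ x| = k'.+1.
Proof. by move=> c xS; move: c; rewrite (cardsD1 x) xS add1n => -[]. Qed.

Lemma f_neq0 (x : 'I_n) : f v x != 0.
Proof.
rewrite /= tofrac_eq0; apply/negP => /eqP e.
by have := hp v x; rewrite e rmorph0 /spec eqxx => /eqP; rewrite eq_sym oner_eq0.
Qed.

Lemma core_upper : (\rank Cmx <= \rank Bm)%N.
Proof.
pose Lm := mxOf (Star k' v) F1 (fun S F => (-1) ^+ pos S v * minor k'.+1 f (S :\ v) F).
pose Bw := mxOf F1 G (fun F T => \sum_(t in T) (F == T :\ t)%:R * ((-1) ^+ pos T t * f v t)).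
have eC : Cmx = Lm *m Bw.
  rewrite /Cmx mulmxOf; apply: eq_mxOf => S T SS TG.
  have [cS vS] := starP SS.
  rewrite (minor_laplace _ cS (hG TG) vS).
  rewrite big_distrr /=.
  rewrite [RHS](eq_bigr (fun F => \sum_(t in T) ((-1) ^+ pos S v * minor k'.+1 f (S :\ v) F) *
     ((F == T :\ t)%:R * ((-1) ^+ pos T t * f v t)))); last by move=> F _; rewrite big_distrr.
  rewrite [RHS]exchange_big /=; apply: eq_bigr => t tT.
  rewrite (bigD1 (T :\ t)) /=; last by rewrite hF1 (cardD1k (hG TG) tT).
  rewrite eqxx mul1r big1 ?addr0; last by move=> F /andP[_ /negPf ->]; rewrite mul0r mulr0.
  by ring.
apply: leq_trans (_ : \rank Bw <= _)%N; first by rewrite eC mxrankM_maxr.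
pose d1 (F : {set 'I_n}) := (\prod_(x in F) f v x)^-1.
pose d2 (T : {set 'I_n}) := \prod_(x in T) f v x.
have eB : Bw = mxOf F1 G (fun F T => d1 F * incR (ratfun n) T F * d2 T).
  apply: eq_mxOf => F T FF TG.
  rewrite (incR_sum _ (hG TG)); last by apply/eqP; rewrite -hF1.
  rewrite big_distrr big_distrl /=; apply: eq_bigr => t tT.
  case: eqP => [->|]; last by rewrite !mul0r !mulr0 mul0r.
  rewrite mul1r mulr1 /d1 /d2 (bigD1 t tT) /=.
  have -> : \prod_(i in T | i != t) f v i = \prod_(x in T :\ t) f v x.
    by apply: eq_bigl => x; rewrite !inE andbC.
  have nz : \prod_(x in T :\ t) f v x != 0 by apply/prodf_neq0 => x _; apply: f_neq0.
  set P := \prod_(x in T :\ t) _; have h4 : forall Pi s b Q : ratfun n, Pi * s * (b * Q) = s * b * (Pi * Q) by move=> *; ring.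
  by rewrite h4 mulVf // mulr1.
rewrite eB; apply: leq_trans (rank_scale _ _ _ _ _) _.
have -> : mxOf F1 G (fun F T => incR (ratfun n) T F) = map_mx (@phi n) (Bm^T).
  by rewrite /Bm trmxOf mapmxOf; apply: eq_mxOf => F T _ _; rewrite incidenceE incR_map.
by rewrite mxrank_map mxrank_tr.
Qed.

Lemma core_lower : (\rank (Bm *m Qm k' v F1) <= \rank Cmx)%N.
Proof.
pose P := mxOf (Star k' v) G (fun S T => minor k'.+2 p S T).
have eC : Cmx = map_mx tf P.
  by rewrite /Cmx mapmxOf; apply: eq_mxOf => S T _ _; rewrite minor_map.
have eR : map_mx (@ev a (n * n)) P = mxOf (Star k' v) G (fun S T => minor k'.+2 (spec v) S T).
  rewrite mapmxOf; apply: eq_mxOf => S T SS TG; rewrite minor_map.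
  have [cS _] := starP SS.
  by apply: (minor_eq v) cS (hG TG) _ => x y _ _; exact: hp.
have sp : (\rank (map_mx (@ev a (n * n)) P) <= \rank Cmx)%N by rewrite eC; exact: rank_specialize.
apply: leq_trans sp.
have eT : (Bm *m Qm k' v F1)^T =
    mxOf (Star k' v) G (fun S T => (-1) ^+ pos S v * minor k'.+2 (spec v) S T * 1).
  rewrite /Bm /Qm mulmxOf trmxOf; apply: eq_mxOf => S T SS TG.
  have [cS vS] := starP SS.
  rewrite sum_delta_r; last by rewrite hF1 (cardD1k cS vS).
  rewrite (minor_laplace _ cS (hG TG) vS) mulr1 mulrA -exprD addnn -signr_odd odd_double expr0 mul1r.
  rewrite incidenceE (incR_sum _ (hG TG) (cardD1k cS vS)); apply: eq_bigr => t tT.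
  rewrite /spec eqxx mulr1 (minor_eq v (g := fun a b => (a == b)%:R)).
  - by rewrite (minor_delta _ v) ?(cardD1k cS vS) ?(cardD1k (hG TG) tT).
  - exact: cardD1k cS vS.
  - exact: cardD1k (hG TG) tT.
  move=> x y; rewrite !inE => /andP[xv _] _.
  by case: eqP => [/val_inj e|//]; rewrite e eqxx in xv.
rewrite -mxrank_tr eT; apply: leq_trans (rank_scale _ _ _ _ _) _.
by rewrite eR.
Qed.

End Core.

Lemma idx_lt n (i j : 'I_n) : (i * n + j < n * n)%N.
Proof.
apply: (@leq_trans (i.+1 * n)); first by rewrite mulSn addnC ltn_add2r.
by rewrite leq_mul2r ltn_ord orbT.
Qed.

Lemma idx_div n (i j : 'I_n) : ((i * n + j) %/ n = i)%N.
Proof.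
have n0 : (0 < n)%N by apply: leq_ltn_trans (ltn_ord i).
by rewrite divnMDl // divn_small ?addn0.
Qed.

Lemma idx_mod n (i j : 'I_n) : ((i * n + j) %% n = j)%N.
Proof. by rewrite modnMDl modn_small. Qed.


Unset Implicit Arguments.

Theorem mainTheorem3 (n k : nat) (G : {set {set 'I_n}}) (v : 'I_n) :
  (2 <= k)%N ->
  (forall e, e \in G -> #|e| = k) ->
  (dominates k G (kstar k v) <-> rbetti (KG k G) (k - 2) = 0%N) /\
  (dominates k (kstar k v) G <-> rbetti (KG k G) (k - 1) = 0%N).
Proof.
case: k => [|[|k']] // _ hG.
have -> : (k'.+2 - 2 = k')%N by rewrite subSS subSS subn0.
have -> : (k'.+2 - 1 = k'.+1)%N by rewrite subSS subn0.
set K := KG k'.+2 G.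
set F1 := faces_card K k'.+1.
set F2 := faces_card K k'.
have hF1 : forall t, (t \in F1) = (#|t| == k'.+1) by move=> t; apply: faces_low.
have hF2 : forall t, (t \in F2) = (#|t| == k') by move=> t; apply: faces_low.
have eG : faces_card K k'.+2 = G by apply/setP => t; apply: faces_top.
have rB : \rank (boundary K k'.+1) = \rank (Bm G F1) by rewrite boundaryE eG.
have BB : Bm G F1 *m Bd F1 F2 = 0 := dd_zero G hG.
have BallB : Ball k' F1 *m Bd F1 F2 = 0.
  by apply: (dd_zero G (A := Fk n k')) => s; rewrite inE => /eqP.
have rZ : (\rank (kermx (Bd F1 F2)) <= #|Star k' v|)%N := rank_le_star v hF1 hF2 (mulmx_ker _).
have rBQ : \rank (Bm G F1 *m Qm k' v F1) = \rank (Bm G F1) := rankMQ v hF1 hF2 BB.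
have BZ : (Bm G F1 <= kermx (Bd F1 F2))%MS by rewrite sub_kermx BB.
have BallZ : (Ball k' F1 <= kermx (Bd F1 F2))%MS by rewrite sub_kermx BallB.
pose p1 i j := mvar (n * n) (i * n + j).
pose a1 l := spec v (l %/ n) (l %% n).
pose p2 i j := mvar (n * n) (j * n + i).
pose a2 l := spec v (l %% n) (l %/ n).
have hp1 : forall i j : 'I_n, ev a1 (p1 i j) = spec v i j.
  by move=> i j; rewrite ev_mvar ?idx_lt // /a1 idx_div idx_mod.
have hp2 : forall i j : 'I_n, ev a2 (p2 i j) = spec v i j.
  by move=> i j; rewrite ev_mvar ?idx_lt // /a2 idx_div idx_mod.
have up1 := core_upper hG hF1 hp1; have lo1 := core_lower hG hF1 hp1.
have up2 := core_upper hG hF1 hp2; have lo2 := core_lower hG hF1 hp2.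
have eC1 : compound_submx k'.+2 (kstar k'.+2 v) G = Cmx k' v G p1 by [].
have eC2 : compound_submx k'.+2 G (kstar k'.+2 v) = (Cmx k' v G p2)^T.
  by apply/matrixP=> i j; rewrite !mxE compound_minor minor_tr.
rewrite rbetti_low // rbetti_top // rB eG (_ : boundary K k' = Bd F1 F2) // -mxrank_ker.
rewrite /dominates eC1 eC2 mxrank_tr; split; split => h.
- apply/eqP; rewrite subn_eq0; apply: leq_trans rZ _.
  by rewrite -[X in (X <= _)%N]h.
- have : (\rank (kermx (Bd F1 F2)) <= \rank (Bm G F1))%N by rewrite -subn_eq0 h.
  rewrite (geq_leqif (mxrank_leqif_sup BZ)) => ZB.
  have : (Ball k' F1 *m Qm k' v F1 <= Bm G F1 *m Qm k' v F1)%MS.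
    by apply: submxMr; apply: submx_trans ZB.
  move/mxrankS => h2; apply/eqP; rewrite eqn_leq rank_leq_row /=.
  apply: leq_trans (Ball_full v hF1) _; apply: leq_trans h2 _; exact: lo1.
- apply/eqP; rewrite subn_eq0 -[X in (X <= _)%N]h; exact: up2.
- apply/eqP; rewrite eqn_leq rank_leq_col /=; apply: leq_trans lo2.
  by rewrite rBQ -subn_eq0 h.
Qed.
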